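(* Let $m\ge1$ and let $G=mK_2$ be the simple graph consisting of $m$ pairwise disjoint edges, whose vertices are among the variables of $S=\mathbb{K}[x_1,\dots,x_n]$, $\mathbb{K}$ a field. Then $\operatorname{sreg}(S/I(G))=\lceil m/2\rceil$.
   Context: For a simple graph $G$ with vertices identified with variables, $I(G)=(xy : \{x,y\}\in E(G))\subset S$ is its edge ideal. Stanley regularity: for a squarefree monomial ideal $I\subset S$, a squarefree Stanley decomposition of $S/I$ is a decomposition $S/I=\bigoplus_{i=1}^r u_i\mathbb{K}[Z_i]$ as $\mathbb{K}$-vector spaces, where $Z_i\subseteq\{x_1,\dots,x_n\}$, $u_i$ are (images of) squarefree monomials with $\operatorname{supp}(u_i)\subseteq Z_i$, and each $u_i\mathbb{K}[Z_i]$ is free over $\mathbb{K}[Z_i]$. Its Stanley regularity is $\max_i\deg(u_i)$, and $\operatorname{sreg}(S/I)$ is the minimum over all such decompositions. *)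

(* Defs.v *)
From mathcomp Require Import all_boot.
Set Implicit Arguments. Unset Strict Implicit. Unset Printing Implicit Defensive.

(* Variables x_1..x_n of S = K[x_1..x_n] are identified with 'I_n.
   A monomial x^a of S is its exponent vector a : 'I_n -> nat. *)
Definition monomial (n : nat) := 'I_n -> nat.

(* A simple graph on (a subset of) the variables is given by its edge set
   E : {set {set 'I_n}} (each edge a 2-element set).  The edge ideal
   I(G) = (x_i x_j : {i,j} in E) is a monomial ideal, so a monomial x^a lies
   in I(G) iff it is divisible by some generator x_i x_j. *)
Definition in_edge_ideal n (E : {set {set 'I_n}}) (a : monomial n) : Prop :=
  exists2 e, e \in E & forall x, x \in e -> 0 < a x.

(* The squarefree monomial u = prod_{x in U} x is encoded by its support U.
   x^a is a monomial of u K[Z] (i.e. x^a = u * w with supp w ⊆ Z) iff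
   a >= 1 on U and a = 0 outside Z (given U ⊆ Z). *)
Definition in_space n (p : {set 'I_n} * {set 'I_n}) (a : monomial n) : Prop :=
  (forall x, x \in p.1 -> 0 < a x) /\ (forall x, x \notin p.2 -> a x = 0).

(* A squarefree Stanley decomposition S/I = (+)_i u_i K[Z_i] of S/I(G),
   listed as D = [(U_1,Z_1); ...; (U_r,Z_r)] with u_i = prod_{x in U_i} x:
   - supp(u_i) ⊆ Z_i;
   - u_i K[Z_i] is free over K[Z_i] in S/I: no monomial u_i w (w in K[Z_i])
     lies in I;
   - the direct sum is all of S/I: every standard monomial (monomial not in
     I, these form a K-basis of S/I) lies in exactly one of the summands. *)
Definition stanley_dec n (E : {set {set 'I_n}})
    (D : seq ({set 'I_n} * {set 'I_n})) : Prop :=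
  [/\ forall p, p \in D -> p.1 \subset p.2,
      forall p, p \in D -> forall a, in_space p a -> ~ in_edge_ideal E a &
      forall a : monomial n, ~ in_edge_ideal E a ->
        exists! i : 'I_(size D), in_space (nth (set0, set0) D i) a].

Definition sdeg n (D : seq ({set 'I_n} * {set 'I_n})) : nat :=
  \max_(p <- D) #|p.1|.

Definition sreg_is n (E : {set {set 'I_n}}) (k : nat) : Prop :=
  (exists D, stanley_dec E D /\ sdeg D = k) /\
  (forall D, stanley_dec E D -> k <= sdeg D).

(* Main.v *)
Require Import Defs.
From mathcomp Require Import all_boot zify.
Set Implicit Arguments. Unset Strict Implicit. Unset Printing Implicit Defensive.

Lemma count1P (T : eqType) (d : T) (P : pred T) (s : seq T) :
  (exists! i : 'I_(size s), P (nth d s i)) <-> count P s = 1.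
Proof.
have -> : count P s = #|[pred i : 'I_(size s) | P (nth d s i)]|.
  rewrite -sum1_count -{1}(mkseq_nth d s) /mkseq big_map.
  have -> : iota 0 (size s) = index_iota 0 (size s) by rewrite /index_iota subn0.
  by rewrite big_mkord sum1_card.
split.
  move=> [i [Pi uni]]; apply/eqP/card1P; exists i => j; rewrite inE /=.
  apply/idP/eqP => [Pj|->//]; exact/esym/uni.
move=> /eqP/card1P [x Hx]; exists x; split.
  by have := Hx x; rewrite !inE eqxx.
by move=> j Pj; have := Hx j; rewrite !inE /= Pj => /esym/eqP.
Qed.

Section S.
Variable n : nat.
Implicit Types (E : {set {set 'I_n}}) (V : {set 'I_n}) (D : seq ({set 'I_n} * {set 'I_n})).

Definition inb (p : {set 'I_n} * {set 'I_n}) (a : monomial n) : bool :=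
  [forall x, (x \in p.1) ==> (0 < a x)] && [forall x, (x \notin p.2) ==> (a x == 0)].

Lemma inbP p a : reflect (in_space p a) (inb p a).
Proof.
apply: (iffP andP) => [[/forallP H1 /forallP H2]|[H1 H2]]; split.
- by move=> x xp; have /implyP := H1 x; apply.
- by move=> x xp; have /implyP := H2 x => /(_ xp)/eqP.
- by apply/forallP => x; apply/implyP; apply: H1.
- by apply/forallP => x; apply/implyP => /H2 ->.
Qed.

Definition good E V D :=
  stanley_dec E D /\ (forall p, p \in D -> p.1 \subset V /\ ~: V \subset p.2).

Definition pmul (p q : {set 'I_n} * {set 'I_n}) := (p.1 :|: q.1, p.2 :&: q.2).

Lemma inb_pmul p q a : inb (pmul p q) a = inb p a && inb q a.
Proof.
apply/inbP/andP => [[H1 H2]|[/inbP[H1 H2] /inbP[H3 H4]]]; split.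
- apply/inbP; split => x xp; first by apply: H1; rewrite inE xp.
  by apply: H2; rewrite inE (negbTE xp).
- apply/inbP; split => x xp; first by apply: H1; rewrite inE xp orbT.
  by apply: H2; rewrite inE (negbTE xp) andbF.
- by move=> x; rewrite inE => /orP[/H1|/H3].
- by move=> x; rewrite inE negb_and => /orP[/H2|/H4].
Qed.

Lemma count_pmul a s t :
  count (inb^~ a) [seq pmul x y | x <- s, y <- t] = count (inb^~ a) s * count (inb^~ a) t.
Proof.
elim: s => //= x s IH; rewrite count_cat IH count_map mulnDl.
congr (_ + _); rewrite /preim /=.
rewrite (@eq_count _ _ (fun y => inb x a && inb y a)); last by move=> y; rewrite /= inb_pmul.
by case: (inb x a) => /=; [rewrite mul1n|rewrite mul0n count_pred0].
Qed.

Lemma dec_cov E D a : stanley_dec E D -> ~ in_edge_ideal E a -> count (inb^~ a) D = 1.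
Proof.
case=> _ _ H /H; rewrite -(count1P (set0, set0)) => -[i [Hi uni]]; exists i; split.
  exact/inbP.
by move=> j /inbP; apply: uni.
Qed.


Lemma cov_of_count D a : count (inb^~ a) D = 1 ->
  exists! i : 'I_(size D), in_space (nth (set0, set0) D i) a.
Proof.
rewrite -(count1P (set0, set0)) => -[i [Hi uni]]; exists i; split; first exact/inbP.
by move=> j /inbP; apply: uni.
Qed.

Lemma sdeg_ge D p : p \in D -> #|p.1| <= sdeg D.
Proof. by move=> pD; rewrite /sdeg; apply: (leq_bigmax_seq p). Qed.

Lemma good_prod E1 E2 V1 V2 D1 D2 : [disjoint V1 & V2] -> good E1 V1 D1 -> good E2 V2 D2 ->
  good (E1 :|: E2) (V1 :|: V2) [seq pmul x y | x <- D1, y <- D2]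
  /\ sdeg [seq pmul x y | x <- D1, y <- D2] <= sdeg D1 + sdeg D2.
Proof.
move=> dV [[s1 f1 c1] h1] [[s2 f2 c2] h2].
have dV' : forall z, z \in V1 -> z \notin V2.
  by move=> z zV; move: dV; rewrite disjoints_subset => /subsetP /(_ z zV); rewrite inE.
split; [split; [split|]|].
- move=> p /allpairsP [[x y] [/= xD yD ->]] /=.
  have [/subsetP hx1 /subsetP hx2] := h1 x xD.
  have [/subsetP hy1 /subsetP hy2] := h2 y yD.
  have /subsetP sx := s1 x xD; have /subsetP sy := s2 y yD.
  apply/subsetP => z; rewrite !inE => /orP[zx|zy]; apply/andP; split.
  + exact: sx.
  + by apply: hy2; rewrite inE; apply: dV'; apply: hx1.
  + apply: hx2; rewrite inE; apply/negP => zV1; have := dV' z zV1.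
    by rewrite hy1.
  + exact: sy.
- move=> p /allpairsP [[x y] [/= xD yD ->]] a /inbP; rewrite inb_pmul.
  move=> /andP[/inbP ax /inbP ay] [e]; rewrite inE => /orP[eE|eE] he.
  + by apply: (f1 x xD a ax); exists e.
  + by apply: (f2 y yD a ay); exists e.
- move=> a Ha; apply: cov_of_count; rewrite count_pmul.
  rewrite (dec_cov (And3 s1 f1 c1)) ?(dec_cov (And3 s2 f2 c2)) //.
  + by move=> [e eE he]; apply: Ha; exists e => //; rewrite inE eE orbT.
  + by move=> [e eE he]; apply: Ha; exists e => //; rewrite inE eE.
- move=> p /allpairsP [[x y] [/= xD yD ->]] /=.
  have [/subsetP hx1 /subsetP hx2] := h1 x xD.
  have [/subsetP hy1 /subsetP hy2] := h2 y yD.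
  split; apply/subsetP => z; rewrite !inE.
  + by case/orP => [/hx1|/hy1] ->; rewrite ?orbT.
  + rewrite negb_or => /andP[z1 z2]; by rewrite hx2 ?hy2 ?inE.
- rewrite {1}/sdeg; apply/bigmax_leqP_seq => p /allpairsP [[x y] [/= xD yD ->]] _ /=.
  apply: leq_trans (leq_card_setU _ _).1 _.
  by apply: leq_add; apply: sdeg_ge.
Qed.


Definition box (su sw : seq 'I_n) : {set 'I_n} * {set 'I_n} := ([set x in su], ~: [set x in sw]).

Lemma inb_box su sw a :
  inb (box su sw) a = all (fun x => 0 < a x) su && all (fun x => ~~ (0 < a x)) sw.
Proof.
apply/inbP/andP => [[H1 H2]|[/allP H1 /allP H2]]; split.
- by apply/allP => x xs; apply: H1; rewrite inE.
- by apply/allP => x xs; rewrite H2 // !inE negbK.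
- by move=> x; rewrite inE => /H1.
- by move=> x; rewrite !inE negbK => /H2; rewrite lt0n negbK => /eqP.
Qed.

Lemma sub_seqset (s t : seq 'I_n) : all (mem t) s -> [set x in s] \subset [set x in t].
Proof. by move=> /allP H; apply/subsetP => x; rewrite !inE => /H. Qed.

Lemma box_V su sw V : [set x in su] \subset V -> [set x in sw] \subset V ->
  (box su sw).1 \subset V /\ ~: V \subset (box su sw).2.
Proof. by move=> h1 h2; split => //=; rewrite setCS. Qed.

Lemma ideal1 (a b : 'I_n) al :
  in_edge_ideal [set [set a; b]] al <-> (0 < al a) && (0 < al b).
Proof.
split => [[e]|/andP[ha hb]].
  by move=> /set1P -> H; rewrite !H ?set21 ?set22.
by exists [set a; b]; rewrite ?set11 // => x /set2P[] ->.
Qed.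

Lemma ideal2 (a b c d : 'I_n) al :
  in_edge_ideal [set [set a; b]; [set c; d]] al <->
  (0 < al a) && (0 < al b) || (0 < al c) && (0 < al d).
Proof.
split => [[e]|/orP[/andP[ha hb]|/andP[ha hb]]].
  move=> eE H; move: eE; case/set2P => ee; subst e; [by rewrite (H a) ?(H b) ?set21 ?set22 | by rewrite (H c) ?(H d) ?set21 ?set22 ?orbT].
  by exists [set a; b]; rewrite ?set21 // => x /set2P[] ->.
by exists [set c; d]; rewrite ?set22 // => x /set2P[] ->.
Qed.

Lemma card_seqset (s : seq 'I_n) k : size s <= k -> #|[set x in s]| <= k.
Proof. by move=> h; rewrite cardsE; apply: leq_trans (card_size s) h. Qed.

Lemma box_sub su sw : ((box su sw).1 \subset (box su sw).2) = all (fun x => x \notin sw) su.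
Proof.
apply/subsetP/allP => /= H x; first by move=> xs; have := H x; rewrite !inE; apply.
by rewrite !inE => /H.
Qed.

Definition D0 := [:: box [::] [::]].

Lemma good_D0 : good set0 set0 D0 /\ sdeg D0 = 0.
Proof.
split; last by rewrite /sdeg big_cons big_nil /= cards0.
split; [split|].
- by move=> p; rewrite inE => /eqP -> /=; rewrite sub0set.
- by move=> p _ a _ [e]; rewrite inE.
- by move=> a _; apply: cov_of_count; rewrite /= inb_box.
- by move=> p; rewrite inE => /eqP ->; apply: box_V; apply/subsetP => x; rewrite inE.
Qed.

Definition D1 (a b : 'I_n) := [:: box [::] [:: b]; box [:: b] [:: a]].

Lemma good_D1 (a b : 'I_n) : a != b ->
  good [set [set a; b]] [set x in [:: a; b]] (D1 a b) /\ sdeg (D1 a b) <= 1.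
Proof.
move=> ab.
have Vl : forall x, x \in [:: a; b] -> [set y in [:: x]] \subset [set x in [:: a; b]].
  by move=> x xs; apply: sub_seqset; rewrite /= xs.
split; last first.
  by rewrite /sdeg !big_cons big_nil /= !geq_max !card_seqset.
split; [split|].
- move=> p; rewrite !inE => /orP[] /eqP -> /=; apply/subsetP => x; rewrite !inE //.
  by move=> /eqP ->; rewrite eq_sym.
- move=> p; rewrite !inE => /orP[] /eqP -> al /inbP; rewrite inb_box /= ideal1;
    by case: (0 < al a); case: (0 < al b).
- move=> al; rewrite ideal1 => H; apply: cov_of_count; rewrite /= !inb_box /=.
  by move: H; case: (0 < al a); case: (0 < al b).
- move=> p; rewrite !inE => /orP[] /eqP ->; apply: box_V;
    by apply: sub_seqset => //=; rewrite !inE eqxx ?orbT.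
Qed.

Definition D2 (a b c d : 'I_n) :=
  [:: box [::] [:: a; b; c; d]; box [:: a] [:: b; d]; box [:: d] [:: b; c];
      box [:: b] [:: a; c]; box [:: c] [:: a; d]].

Lemma good_D2 (a b c d : 'I_n) : uniq [:: a; b; c; d] ->
  good [set [set a; b]; [set c; d]] [set x in [:: a; b; c; d]] (D2 a b c d)
  /\ sdeg (D2 a b c d) <= 1.
Proof.
move=> un.
split; last by rewrite /sdeg !big_cons big_nil /= !geq_max !card_seqset.
move: un; rewrite /= !inE !negb_or => /and4P [/and3P[ab ac ad] /andP[bc bd] cd _].
split; [split|].
- apply/allP; rewrite /= !box_sub /= !inE !negb_or.
  by rewrite !(eq_sym d) (eq_sym c a) (eq_sym b a) ab ad bd cd bc ac.
- move=> p; rewrite !inE => /orP[/eqP->|/orP[/eqP->|/orP[/eqP->|/orP[/eqP->|/eqP->]]]] al /inbP; rewrite inb_box /= ideal2;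
    by case: (0 < al a); case: (0 < al b); case: (0 < al c); case: (0 < al d).
- move=> al; rewrite ideal2 => H; apply: cov_of_count; rewrite /= !inb_box /=.
  by move: H; case: (0 < al a); case: (0 < al b); case: (0 < al c); case: (0 < al d).
- move=> p; rewrite !inE => /orP[/eqP->|/orP[/eqP->|/orP[/eqP->|/orP[/eqP->|/eqP->]]]]; apply: box_V;
    by apply: sub_seqset => //=; rewrite !inE !eqxx ?orbT.
Qed.

Lemma cover_in E e x : e \in E -> x \in e -> x \in cover E.
Proof. by move=> eE xe; apply/bigcupP; exists e. Qed.

Lemma disj_in (A B : {set 'I_n}) x : [disjoint A & B] -> x \in A -> x \in B -> False.
Proof. by rewrite disjoints_subset => /subsetP H /H; rewrite inE => /negP. Qed.

Lemma upper E : (forall e, e \in E -> #|e| = 2) -> trivIset E ->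
  exists V D, V \subset cover E /\ good E V D /\ sdeg D <= uphalf #|E|.
Proof.
have [k] := ubnP #|E|; elim: k E => // k IH E ltE H2 tr.
case Em: #|E| => [|[|m]].
- move/cards0_eq: Em => ->; exists set0, D0; rewrite sub0set.
  by have [g s] := good_D0; rewrite s.
- move/eqP/cards1P: Em => [e Ee]; subst E.
  have /cards2P[a [b [ab ->]]] : #|e| == 2 by rewrite H2 ?set11.
  exists [set x in [:: a; b]], (D1 a b).
  have [g s] := good_D1 ab; split => //.
  apply/subsetP => x; rewrite !inE => xab; apply: (cover_in (e := [set a; b])).
    by rewrite inE.
  by rewrite !inE.
have [e Ee] : exists e, e \in E by apply/set0Pn; rewrite -card_gt0 Em.
have E1c : #|E :\ e| = m.+1 by move: (cardsD1 e E); rewrite Ee Em add1n => -[].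
have [f] : exists f, f \in E :\ e by apply/set0Pn; rewrite -card_gt0 E1c.
rewrite !inE => /andP[fe Ef].
have E2c : #|E :\ e :\ f| = m.
  by move: (cardsD1 f (E :\ e)); rewrite E1c !inE fe Ef add1n => -[].
have sE1 : E :\ e :\ f \subset E.
  by apply/subsetP => g; rewrite !inE => /and3P[].
have lt1 : #|E :\ e :\ f| < k by rewrite E2c; move: ltE; rewrite Em; lia.
have [V1 [D' [V1c [g1 s1]]]] := IH (E :\ e :\ f) lt1
   (fun g gE => H2 g (subsetP sE1 g gE)) (trivIsetS sE1 tr).
have Eq : (E :\ e :\ f) :|: [set e; f] = E.
  apply/setP => g; rewrite !inE.
  case: (eqVneq g e) => [->|ge]; first by rewrite Ee orbT.
  case: (eqVneq g f) => [->|gf]; first by rewrite Ef orbT.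
  by case: (g \in E).
have ef : e != f by rewrite eq_sym.
have def := trivIsetP tr e f Ee Ef ef.
have V1d : forall x B, x \in V1 -> B \in [set e; f] -> x \in B -> False.
  move=> x B xV BE xB; have /bigcupP [B' B'E xB'] := subsetP V1c x xV.
  move: B'E; rewrite !inE => /and3P [B'f B'e B'E].
  have BE' : B \in E by move: BE; rewrite !inE => /orP[]/eqP->.
  have B'B : B' != B by move: BE; rewrite !inE => /orP[]/eqP->.
  by apply: (disj_in (trivIsetP tr B' B B'E BE' B'B) xB' xB).
have /cards2P[a [b [ab ee]]] : #|e| == 2 by rewrite H2.
have /cards2P[c [d [cd ff]]] : #|f| == 2 by rewrite H2.
subst e f.
have nab : forall x y, x \in [set a; b] -> y \in [set c; d] -> x != y.
  by move=> x y xe yf; apply/eqP => xy; subst y; apply: (disj_in def xe yf).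
have un : uniq [:: a; b; c; d].
  rewrite /= !inE !negb_or ab cd !nab ?set21 ?set22 //.
have [g2 s2] := good_D2 un.
have dV : [disjoint V1 & [set x in [:: a; b; c; d]]].
  rewrite disjoints_subset; apply/subsetP => x xV; rewrite !inE.
  apply/negP => /or4P[] /eqP xe; subst x.
  + by apply: (V1d a [set a; b] xV); rewrite ?set21 ?set22 ?inE ?eqxx.
  + by apply: (V1d b [set a; b] xV); rewrite ?set21 ?set22 ?inE ?eqxx ?orbT.
  + by apply: (V1d c [set c; d] xV); rewrite ?set21 ?set22 ?inE ?eqxx ?orbT.
  + by apply: (V1d d [set c; d] xV); rewrite ?set21 ?set22 ?inE ?eqxx ?orbT.
have [g s] := good_prod dV g1 g2.
rewrite Eq in g.
exists (V1 :|: [set x in [:: a; b; c; d]]), [seq pmul x y | x <- D', y <- D2 a b c d].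
split; [|split => //].
  rewrite subUset; apply/andP; split.
    apply/subsetP => x /(subsetP V1c) /bigcupP [B BE xB].
    by apply: (cover_in (subsetP sE1 B BE) xB).
  apply/subsetP => x; rewrite !inE => /or4P[] /eqP ->.
  + by apply: (cover_in Ee); rewrite set21.
  + by apply: (cover_in Ee); rewrite set22.
  + by apply: (cover_in Ef); rewrite set21.
  + by apply: (cover_in Ef); rewrite set22.
apply: (leq_trans s); rewrite E2c in s1.
have -> : uphalf m.+2 = uphalf m + 1 by rewrite addn1.
by apply: leq_add.
Qed.

Definition ind (F : {set 'I_n}) : monomial n := fun x => (x \in F : nat).

Lemma inb_ind p F : inb p (ind F) = (p.1 \subset F) && (F \subset p.2).
Proof.
apply/inbP/andP => [[H1 H2]|[/subsetP H1 /subsetP H2]]; split.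
- by apply/subsetP => x /H1; rewrite /ind; case: (x \in F).
- apply/subsetP => x xF; apply/negPn/negP => /H2; rewrite /ind xF //.
- by move=> x /H1; rewrite /ind => ->.
- move=> x xZ; rewrite /ind; case xF: (x \in F) => //.
  by move: xZ; rewrite H2.
Qed.

Definition flip (e F : {set 'I_n}) := (F :\: e) :|: (e :\: F).

Lemma flipK e : cancel (flip e) (flip e).
Proof.
move=> F; apply/setP => x; rewrite /flip !inE.
by case: (x \in F); case: (x \in e).
Qed.

Definition d0 : {set 'I_n} * {set 'I_n} := (set0, set0).

Section Lower.
Variables (E : {set {set 'I_n}}) (D : seq ({set 'I_n} * {set 'I_n})).
Hypothesis H2 : forall e, e \in E -> #|e| = 2.
Hypothesis tr : trivIset E.
Hypothesis dec : stanley_dec E D.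

Definition Fs := [set F : {set 'I_n} | (F \subset cover E) && [forall e in E, #|F :&: e| == 1]].

Lemma Fs_indep F : F \in Fs -> ~ in_edge_ideal E (ind F).
Proof.
rewrite inE => /andP[_ /forall_inP H] [e eE he].
have : e \subset F by apply/subsetP => x /he; rewrite /ind; case: (x \in F).
move/setIidPr => eq; have := H e eE; rewrite eq H2 //.
Qed.

Lemma Z_indep p e : p \in D -> e \in E -> ~~ (e \subset p.2).
Proof.
move=> pD eE; apply/negP => /subsetP ez.
case: dec => s f _; apply: (f p pD (ind p.2)).
  by apply/inbP; rewrite inb_ind (s p pD) subxx.
by exists e => // x /ez; rewrite /ind => ->.
Qed.

Definition dU (F : {set 'I_n}) : {set 'I_n} :=
  if [pick i : 'I_(size D) | inb (nth d0 D i) (ind F)] is Some i then (nth d0 D i).1 else set0.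

Lemma dU_spec F : ~ in_edge_ideal E (ind F) ->
  exists i : 'I_(size D), inb (nth d0 D i) (ind F) /\ dU F = (nth d0 D i).1.
Proof.
move=> nI; rewrite /dU; case: pickP => [i Hi|H]; first by exists i.
case: dec => _ _ /(_ _ nI) [i [Hi _]].
by move: (H i); rewrite (introT (inbP _ _) Hi).
Qed.

Lemma dU_le F : ~ in_edge_ideal E (ind F) -> #|dU F| <= sdeg D.
Proof.
move=> /dU_spec [i [_ ->]]; apply: sdeg_ge; exact: mem_nth.
Qed.

Lemma flip_Fs e F : e \in E -> F \in Fs -> flip e F \in Fs.
Proof.
move=> eE; rewrite !inE => /andP[/subsetP Fc /forall_inP H]; apply/andP; split.
  apply/subsetP => x; rewrite !inE => /orP[/andP[_ /Fc]//|/andP[_ xe]].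
  exact: (cover_in eE).
apply/forall_inP => e' e'E.
case: (eqVneq e' e) => [->|e'e].
  have -> : flip e F :&: e = e :\: F.
    by apply/setP => x; rewrite /flip !inE; case: (x \in F); case: (x \in e).
  by rewrite cardsD H2 // setIC (eqP (H e eE)).
have -> : flip e F :&: e' = F :&: e'.
  apply/setP => x; rewrite /flip !inE.
  case xe': (x \in e'); rewrite ?andbF //.
  have xe : x \in e = false.
    by apply/negP => xe; apply: (disj_in (trivIsetP tr _ _ e'E eE e'e) xe' xe).
  by rewrite xe /= andbF orbF.
exact: H.
Qed.

Lemma key e F : e \in E -> F \in Fs -> 0 < #|dU F :&: e| + #|dU (flip e F) :&: e|.
Proof.
move=> eE FF; have FF' := flip_Fs eE FF.
have [i [hi ei]] := dU_spec (Fs_indep FF).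
have [j [hj ej]] := dU_spec (Fs_indep FF').
rewrite addn_gt0 !card_gt0 ei ej.
case: (eqVneq ((nth d0 D i).1 :&: e) set0) => [i0|]; last by [].
case: (eqVneq ((nth d0 D j).1 :&: e) set0) => [j0|]; last by rewrite orbT.
exfalso.
have GI : ~ in_edge_ideal E (ind (F :\: e)).
  move=> [e' e'E he']; apply: (Fs_indep FF); exists e' => // x /he'.
  by rewrite /ind !inE; case: (x \in F); rewrite ?andbF.
have sub : forall (p : {set 'I_n} * {set 'I_n}) F', p.1 :&: e = set0 -> inb p (ind F') ->
    inb p (ind (F' :\: e)).
  move=> p F' p0; rewrite !inb_ind => /andP[u f]; apply/andP; split.
    apply/subsetP => x xu; rewrite inE (subsetP u x xu) andbT; apply/negP => xe.
    have : x \in p.1 :&: e by rewrite inE xu xe.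
    by rewrite p0 inE.
  exact: subset_trans (subsetDl _ _) f.
have hi' := sub _ _ i0 hi.
have hj' := sub _ _ j0 hj.
have eqG : flip e F :\: e = F :\: e.
  by apply/setP => x; rewrite /flip !inE; case: (x \in F); case: (x \in e).
rewrite eqG in hj'.
case: dec => _ _ /(_ _ GI) [k [_ uni]].
have eij : i = j by rewrite -(uni i (elimT (inbP _ _) hi')) -(uni j (elimT (inbP _ _) hj')).
subst j.
move: hi hj; rewrite !inb_ind => /andP[_ /subsetP f1] /andP[_ /subsetP f2].
apply: (negP (Z_indep (mem_nth d0 (ltn_ord i)) eE)).
apply/subsetP => x xe; case xF: (x \in F); first exact: f1.
by apply: f2; rewrite /flip !inE xF xe.
Qed.

Lemma sum_cap (U : {set 'I_n}) : \sum_(e in E) #|U :&: e| <= #|U|.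
Proof.
have -> : \sum_(e in E) #|U :&: e| = \sum_(e in E) \sum_(x in U) (x \in e : nat).
  apply: eq_bigr => e _; rewrite -sum1_card big_mkcond [RHS]big_mkcond /=.
  by apply: eq_bigr => x _; rewrite inE; case: (x \in U); case: (x \in e).
rewrite exchange_big /= -[X in _ <= X]sum1_card; apply: leq_sum => x xU.
case: (boolP [exists e in E, x \in e]) => [/exists_inP [e0 e0E xe0]|/exists_inP none].
  rewrite (bigD1 e0) //= xe0 big1 // => e /andP[eE ne]; apply/eqP; rewrite eqb0.
  apply/negP => xe; exact: (disj_in (trivIsetP tr e e0 eE e0E ne) xe xe0).
rewrite big1 // => e eE; case xe: (x \in e) => //; exfalso; apply: none; by exists e.
Qed.

Lemma Fs_nonempty : 0 < #|Fs|.
Proof.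
apply/card_gt0P.
exists [set x | [exists e in E, [pick y in e] == Some x]]; rewrite inE; apply/andP; split.
  apply/subsetP => x; rewrite inE => /exists_inP [e eE /eqP].
  case: pickP => // y ye [<-]; exact: (cover_in eE).
apply/forall_inP => e eE.
case Pe: [pick y in e] => [y|]; last first.
  move: Pe; case: pickP => // none _.
  by have := H2 eE; rewrite (eq_card0 none).
have ye : y \in e by move: Pe; case: pickP => // y' ? [<-].
have -> : [set x | [exists e0 in E, [pick y0 in e0] == Some x]] :&: e = [set y].
  apply/setP => x; rewrite !inE; apply/andP/eqP => [[/exists_inP [e' e'E /eqP pe'] xe]|->].
    have xe' : x \in e' by move: pe'; case: pickP => // y' ? [<-].
    case: (eqVneq e' e) => [ee|ne]; last first.
      by case: (disj_in (trivIsetP tr e' e e'E eE ne) xe' xe).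
    by move: pe'; rewrite ee Pe => -[].
  by split => //; apply/exists_inP; exists e => //; rewrite Pe.
by rewrite cards1.
Qed.

Lemma lower_bound m : #|E| = m -> uphalf m <= sdeg D.
Proof.
move=> Em.
have per : forall e, e \in E -> #|Fs| <= 2 * \sum_(F in Fs) #|dU F :&: e|.
  move=> e eE.
  have R : \sum_(F in Fs) #|dU (flip e F) :&: e| = \sum_(F in Fs) #|dU F :&: e|.
    rewrite [RHS](reindex_inj (can_inj (flipK e))) /=; apply: eq_bigl => F.
    apply/idP/idP => [|/(flip_Fs eE)]; [exact: flip_Fs|by rewrite flipK].
  rewrite mul2n -addnn -{2}R -big_split /= -sum1_card; apply: leq_sum => F FF.
  exact: key.
have tot : m * #|Fs| <= 2 * (sdeg D * #|Fs|).
  rewrite -Em -sum_nat_const.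
  have S : \sum_(e in E) #|Fs| <= \sum_(e in E) 2 * \sum_(F in Fs) #|dU F :&: e| by apply: leq_sum.
  apply: (leq_trans S).
  rewrite -big_distrr /= leq_mul2l /=.
  rewrite exchange_big /= mulnC -sum_nat_const; apply: leq_sum => F FF.
  exact: leq_trans (sum_cap _) (dU_le (Fs_indep FF)).
rewrite leq_uphalf_double -mul2n.
by move: tot; rewrite mulnA leq_pmul2r // Fs_nonempty.
Qed.

End Lower.

End S.

Theorem corollary5p3 (n m : nat) (E : {set {set 'I_n}}) :
  1 <= m ->
  #|E| = m ->
  (forall e, e \in E -> #|e| = 2) ->
  trivIset E ->
  sreg_is E (uphalf m).
Proof.
move=> _ Em H2 tr; split; last by move=> D dec; exact: (lower_bound H2 tr dec Em).
have [V [D [_ [[dec _] s]]]] := upper H2 tr.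
exists D; split => //; apply/eqP; rewrite eqn_leq -{1}Em s /=.
exact: (lower_bound H2 tr dec Em).
Qed.
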